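(* In the setting described in the context, for every $x\in X$ it holds that $|\pi^{-1}(\{\pi(x)\})|\leq m^{2^r[G:G']}$.
   Context: $G$ is a countable group with a finite index normal subgroup $G'\cong\mathbb Z^r$ ($r\in\mathbb N$); identify $G'$ with $\mathbb Z^r$ (written multiplicatively inside $G$), standard basis $e_1,\dots,e_r$. For each $j$, $(p^i_j)_i$ are strictly increasing positive integers with $p^i_j\mid p^{i+1}_j$, $p^i_j>2i+1$; $\Gamma_i=\langle p^i_je_j:1\le j\le r\rangle\le G'$, with $[\Gamma_i:\Gamma_{i+1}]>1/(1-2^{-(1/2)^{i+1}})$. $D_i\subseteq G'$ are fundamental domains of $G'/\Gamma_i$ of box form $\{x:-q^i_{1,j}\le x_j<q^i_{2,j}\}$ ($q^i_{1,j},q^i_{2,j}>i$, $q^i_{1,j}+q^i_{2,j}=p^i_j$), with $1_G\in D_i\subseteq D_{i+1}$, $\bigcup_iD_i=G'$, and $D_i=\bigcup_{\gamma\in D_i\cap\Gamma_{i-1}}\gamma D_{i-1}$ for $i\ge2$. $R\subseteq G$ is a finite set of representatives of $G/G'$ with $1_G\in R$. Let $m\ge2$, $\Sigma=\{1,\dots,m,\beta\}$ with $\beta$ a new symbol, $\alpha_i\in\{1,\dots,m\}$ with $\alpha_i\equiv i\pmod m$. Define $\eta\in\Sigma^G$: $J(0)=\{1_G\}$; $\eta(g)=\alpha_1$ for $g\in\Gamma_1$ and $\eta(g)=\beta$ for $g\in\Gamma_1(R\setminus\{1_G\})$; for $n\ge1$, $J(n)=D_n\setminus\bigcup_{i=0}^{n-1}\Gamma_{i+1}J(i)$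 and $\eta(g)=\alpha_{n+1}$ for $g\in\Gamma_{n+1}J(n)R$. The shift is $\sigma^g(x)(h)=x(g^{-1}h)$ and $X=\overline{O_\sigma(\eta)}$ is the closure of the shift orbit of $\eta$. For $y\in\Sigma^G$, $\mathrm{Per}(y,\Gamma,\alpha)=\{g\in G:y(\gamma^{-1}g)=\alpha\ \forall\gamma\in\Gamma\}$, and $C_n=\{y\in X:\mathrm{Per}(y,\Gamma_n,\alpha)=\mathrm{Per}(\eta,\Gamma_n,\alpha)\ \forall\alpha\in\Sigma\}$. The odometer is $\overleftarrow G=\{(\Gamma_ng_n)_n\in\prod_n\Gamma_n\backslash G:\Gamma_ng_{n+1}=\Gamma_ng_n\ \forall n\}$ (right cosets), with $G$-action $(\Gamma_ng_n)_n\mapsto(\Gamma_ng_ng^{-1})_n$, and $\pi:X\to\overleftarrow G$ is the factor map onto it (the maximal equicontinuous factor) given by $\pi(x)=(\Gamma_ng_n)_n$ if and only if $x\in\sigma^{g_n^{-1}}C_n$ for every $n$. *)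

(* Defs.v *)
From mathcomp Require Import all_boot all_order all_algebra.
From Stdlib Require Reals.
Set Implicit Arguments. Unset Strict Implicit. Unset Printing Implicit Defensive.
Import GRing.Theory Num.Theory.
Local Open Scope ring_scope.

(* Z^r, identified with G' ; written additively here. *)
Definition Zr (r : nat) := {ffun 'I_r -> int}.
Definition vadd r (a b : Zr r) : Zr r := [ffun j => a j + b j].
Definition vneg r (a : Zr r) : Zr r := [ffun j => - a j].
Definition vzero r : Zr r := [ffun _ => 0].

Definition is_group (G : Type) (mul : G -> G -> G) (inv : G -> G) (e : G) :=
  [/\ forall x y z, mul x (mul y z) = mul (mul x y) z,
      forall x, mul e x = x & forall x, mul (inv x) x = e].

Definition Gam r (p : nat -> 'I_r -> nat) (n : nat) (a : Zr r) : Prop :=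
  forall j, a j \in dvdz (p n j)%:Z.

Definition Dom r (q1 q2 : nat -> 'I_r -> nat) (n : nat) (a : Zr r) : Prop :=
  forall j, - ((q1 n j)%:Z) <= a j < (q2 n j)%:Z.

Definition gindex r (p : nat -> 'I_r -> nat) (i : nat) : nat :=
  (\prod_(j < r) (p i.+1 j %/ p i j))%N.

Definition index_cond (k i : nat) : Prop :=
  let one := Raxioms.INR 1 in let two := Raxioms.INR 2 in
  Rdefinitions.Rlt
    (Rdefinitions.Rdiv one
       (Rdefinitions.Rminus one
          (Rpower.Rpower two (Rdefinitions.Ropp (Rpow_def.pow (Rdefinitions.Rinv two) i.+1)))))
    (Raxioms.INR k).

(* Jf n i = J(i) for i <= n ;  J(0) = {0},
   J(n) = D_n \ U_{i=0}^{n-1} Gamma_{i+1} J(i) *)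
Fixpoint Jf r (p q1 q2 : nat -> 'I_r -> nat) (n : nat) : nat -> Zr r -> Prop :=
  match n with
  | 0 => fun _ a => a = vzero r
  | n'.+1 => fun i a =>
      if (i <= n')%N then Jf p q1 q2 n' i a
      else Dom q1 q2 n a /\
           ~ (exists i', (i' < n)%N /\ exists y, Jf p q1 q2 n' i' y /\
                              Gam p i'.+1 (vadd a (vneg y)))
  end.
Definition J r (p q1 q2 : nat -> 'I_r -> nat) (n : nat) : Zr r -> Prop :=
  Jf p q1 q2 n n.

(* Alphabet Sigma = {1,..,m, beta}: Some k stands for the symbol k+1, None for beta *)
Definition Sigma (m : nat) := option 'I_m.
Definition beta m : Sigma m := None.
(* alpha_i in {1..m} with alpha_i = i mod m *)
Definition alpha (m i : nat) : Sigma m :=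
  match m return Sigma m with
  | 0 => None
  | m'.+1 => Some (inord ((i + m') %% m'.+1))
  end.

Definition shift (G : Type) (mul : G -> G -> G) (inv : G -> G) (A : Type)
  (g : G) (x : G -> A) : G -> A := fun h => x (mul (inv g) h).

(* closure of the shift orbit of eta in A^G (product topology, discrete A):
   every cylinder neighbourhood of x meets the orbit. *)
Definition in_orbit_closure (G : eqType) (mul : G -> G -> G) (inv : G -> G) (A : Type)
  (eta x : G -> A) : Prop :=
  forall F : seq G, exists g, forall h, h \in F -> x h = shift mul inv g eta h.

Definition Per (G : Type) (mul : G -> G -> G) (inv : G -> G) r (iota : Zr r -> G)
  (p : nat -> 'I_r -> nat) (A : Type) (y : G -> A) (n : nat) (al : A) (g : G) : Prop :=
  forall c, Gam p n c -> y (mul (inv (iota c)) g) = al.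

Definition Cset (G : eqType) (mul : G -> G -> G) (inv : G -> G) r (iota : Zr r -> G)
  (p : nat -> 'I_r -> nat) (A : Type) (eta : G -> A) (n : nat) (y : G -> A) : Prop :=
  in_orbit_closure mul inv eta y /\
  forall al g, Per mul inv iota p y n al g <-> Per mul inv iota p eta n al g.

(* pi(x) = (Gamma_n g_n)_n  iff  x in sigma^{g_n^{-1}} C_n for every n >= 1 *)
Definition pi_is (G : eqType) (mul : G -> G -> G) (inv : G -> G) r (iota : Zr r -> G)
  (p : nat -> 'I_r -> nat) (A : Type) (eta : G -> A) (x : G -> A) (gs : nat -> G) : Prop :=
  forall n, (1 <= n)%N ->
    exists y, Cset mul inv iota p eta n y /\
              forall h, x h = shift mul inv (inv (gs n)) y h.

(* |S| <= N for a possibly infinite set S of functions (up to extensional equality) *)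
Definition card_le (G A : Type) (S : (G -> A) -> Prop) (N : nat) : Prop :=
  forall (k : nat) (f : 'I_k -> G -> A),
    (forall i, S (f i)) ->
    (forall i i', (forall h, f i h = f i' h) -> i = i') ->
    (k <= N)%N.

(* Main.v *)
Require Import Defs.
From mathcomp Require Import all_boot all_order all_algebra.
Import GRing.Theory Num.Theory.
From mathcomp Require Import zify ring lra.
From Stdlib Require ClassicalEpsilon Classical_Prop.
Set Implicit Arguments. Unset Strict Implicit. Unset Printing Implicit Defensive.
Local Open Scope ring_scope.

Lemma vaddE r (a b : Zr r) : vadd a b = a + b.
Proof. by apply/ffunP=> j; rewrite !ffunE. Qed.
Lemma vnegE r (a : Zr r) : vneg a = - a.
Proof. by apply/ffunP=> j; rewrite !ffunE. Qed.
Lemma vzeroE r : vzero r = 0.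
Proof. by apply/ffunP=> j; rewrite !ffunE. Qed.

Record Lat (r : nat) (p q1 q2 : nat -> 'I_r -> nat) : Prop := {
  L_pos : forall i j, (1 <= i)%N -> (0 < p i j)%N;
  L_incr : forall i j, (1 <= i)%N -> (p i j < p i.+1 j)%N;
  L_dvd : forall i j, (1 <= i)%N -> (p i j %| p i.+1 j)%N;
  L_big : forall i j, (1 <= i)%N -> (2 * i + 1 < p i j)%N;
  L_qbig : forall i j, (1 <= i)%N -> (i < q1 i j)%N /\ (i < q2 i j)%N;
  L_qsum : forall i j, (1 <= i)%N -> (q1 i j + q2 i j)%N = p i j;
  L_one : forall i, (1 <= i)%N -> Dom q1 q2 i (vzero r);
  L_nest : forall i a, (1 <= i)%N -> Dom q1 q2 i a -> Dom q1 q2 i.+1 a;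
  L_cover : forall a, exists i, (1 <= i)%N /\ Dom q1 q2 i a;
  L_decomp : forall i a, (2 <= i)%N ->
      (Dom q1 q2 i a <->
       exists c, [/\ Dom q1 q2 i c, Gam p i.-1 c & Dom q1 q2 i.-1 (vadd a (vneg c))])
}.

Definition rep r (p q1 : nat -> 'I_r -> nat) (n : nat) (a : Zr r) : Zr r :=
  [ffun j => ((a j + (q1 n j)%:Z) %% (p n j)%:Z)%Z - (q1 n j)%:Z].


Lemma subBB (V : zmodType) (x y z : V) : (z - y) - (z - x) = x - y.
Proof. by rewrite opprB addrC addrA subrK. Qed.

Lemma addrSub (V : zmodType) (x y : V) : x = y + (x - y).
Proof. by rewrite addrC subrK. Qed.

Lemma Gam0 r p n : Gam p n (0 : Zr r).
Proof. by move=> j; rewrite ffunE rpred0. Qed.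
Lemma GamD r p n (a b : Zr r) : Gam p n a -> Gam p n b -> Gam p n (a + b).
Proof. by move=> ha hb j; rewrite ffunE rpredD. Qed.
Lemma GamN r p n (a : Zr r) : Gam p n a -> Gam p n (- a).
Proof. by move=> ha j; rewrite ffunE rpredN. Qed.
Lemma GamB r p n (a b : Zr r) : Gam p n a -> Gam p n b -> Gam p n (a - b).
Proof. by move=> ha hb; apply: GamD => //; apply: GamN. Qed.
Lemma GamBC r p n (a b : Zr r) : Gam p n (a - b) -> Gam p n (b - a).
Proof. by move=> h; rewrite -opprB; apply: GamN. Qed.

Lemma Gam_mono r p q1 q2 (L : Lat p q1 q2) i k (a : Zr r) :
  (1 <= i)%N -> (i <= k)%N -> Gam p k a -> Gam p i a.
Proof.
move=> i1 /subnK <-; elim: (k - i)%N => [|d IH] //= h; apply: IH => j.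
apply: dvdz_trans (h j); rewrite dvdzE /=; rewrite addSn; apply: (L_dvd L); lia.
Qed.

Lemma Dom_mono r p q1 q2 (L : Lat p q1 q2) i k (a : Zr r) :
  (1 <= i)%N -> (i <= k)%N -> Dom q1 q2 i a -> Dom q1 q2 k a.
Proof.
move=> i1 /subnK <-; elim: (k - i)%N => [|d IH] //= h.
rewrite addSn; apply: (L_nest L); first lia. exact: IH.
Qed.

Lemma rep_Dom r p q1 q2 (L : Lat p q1 q2) n (a : Zr r) :
  (1 <= n)%N -> Dom q1 q2 n (rep p q1 n a).
Proof.
move=> n1 j; rewrite ffunE; have := L_qsum L j n1; have := L_pos L j n1.
set P := p n j; set x := (a j + _)%Z => hp hs.
have h0 : (0 <= (x %% P%:Z)%Z) by apply: modz_ge0; lia.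
have h1 : ((x %% P%:Z)%Z < P%:Z) by apply: ltz_pmod; lia.
lia.
Qed.

Lemma rep_Gam r p q1 q2 (L : Lat p q1 q2) n (a : Zr r) :
  (1 <= n)%N -> Gam p n (a - rep p q1 n a).
Proof.
move=> n1 j; rewrite !ffunE; apply/dvdzP.
exists ((a j + (q1 n j)%:Z) %/ (p n j)%:Z)%Z.
have := divz_eq (a j + (q1 n j)%:Z) (p n j)%:Z. set X := (_ %/ _)%Z; set Y := (_ %% _)%Z; clearbody X Y; lra.
Qed.

Lemma Dom_uniq r p q1 q2 (L : Lat p q1 q2) n (d d' : Zr r) :
  (1 <= n)%N -> Dom q1 q2 n d -> Dom q1 q2 n d' -> Gam p n (d - d') -> d = d'.
Proof.
move=> n1 hd hd' hg; apply/ffunP=> j.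
have := hg j; rewrite !ffunE => /dvdzP [k hk].
have := L_qsum L j n1; have := L_pos L j n1; have := hd j; have := hd' j.
move=> h1 h2 h3 h4.
have hP : (0 < (p n j)%:Z) by lia.
have hlt : (d j - d' j < (p n j)%:Z) by lia.
have hgt : (- (p n j)%:Z < d j - d' j) by lia.
rewrite hk in hlt hgt.
have k0 : k = 0.
  case: (ltrgtP k 0) => // hk0; [have : k <= -1 by lia | have : 1 <= k by lia]; nia.
by apply/eqP; rewrite -subr_eq0 hk k0 mul0r.
Qed.

Lemma rep_eq r p q1 q2 (L : Lat p q1 q2) n (a d : Zr r) :
  (1 <= n)%N -> Dom q1 q2 n d -> Gam p n (a - d) -> rep p q1 n a = d.
Proof.
move=> n1 hd hg; apply: (Dom_uniq L n1) => //; first exact: (rep_Dom L _ n1).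
rewrite -(subBB _ _ a).
by apply: GamB => //; exact: (rep_Gam L _ n1).
Qed.

Lemma rep_rep r p q1 q2 (L : Lat p q1 q2) n k (a : Zr r) :
  (1 <= n)%N -> (n <= k)%N -> rep p q1 n (rep p q1 k a) = rep p q1 n a.
Proof.
move=> n1 nk; apply: (rep_eq L n1); first exact: (rep_Dom L _ n1).
rewrite -(subBB _ _ a).
apply: GamB; first exact: (rep_Gam L _ n1).
apply: (Gam_mono L n1 nk); apply: (rep_Gam L); lia.
Qed.

Lemma rep_GamD r p q1 q2 (L : Lat p q1 q2) n (a c : Zr r) :
  (1 <= n)%N -> Gam p n c -> rep p q1 n (a + c) = rep p q1 n a.
Proof.
move=> n1 hc; apply: (rep_eq L n1); first exact: (rep_Dom L _ n1).
rewrite addrAC; apply: GamD => //; exact: (rep_Gam L _ n1).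
Qed.

Lemma Dom0 r p q1 q2 (L : Lat p q1 q2) n : (1 <= n)%N -> Dom q1 q2 n (0 : Zr r).
Proof. by move=> n1; rewrite -vzeroE; apply: (L_one L). Qed.

Lemma decompE r p q1 q2 (L : Lat p q1 q2) k (a : Zr r) : (1 <= k)%N ->
  (Dom q1 q2 k.+1 a <->
       exists c, [/\ Dom q1 q2 k.+1 c, Gam p k c & Dom q1 q2 k (a - c)]).
Proof.
move=> k1; have h2 : (2 <= k.+1)%N by lia.
have [H1 H2] := L_decomp L a h2; split.
  by move/H1=> [c [? ? ?]]; exists c; split => //; rewrite -vnegE -vaddE.
by move=> [c [? ? ?]]; apply: H2; exists c; split => //; rewrite vnegE vaddE.
Qed.

Lemma Tile r p q1 q2 (L : Lat p q1 q2) n k (x : Zr r) :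
  (1 <= n)%N -> (n <= k)%N ->
  (Dom q1 q2 k x <-> exists t, [/\ Gam p n t, Dom q1 q2 k t & Dom q1 q2 n (x - t)]).
Proof.
move=> n1 /subnK <-; elim: (k - n)%N x => [|d IH] x /=.
  rewrite add0n; split; first by move=> hx; exists 0; rewrite subr0; split=> //; [exact: Gam0 | exact: (Dom0 L n1)].
  case=> t [ht hdt hxt]; have t0 : t = 0.
    by apply: (Dom_uniq L n1) => //; [exact: (Dom0 L n1) | rewrite subr0].
  by move: hxt; rewrite t0 subr0.
have dn1 : (1 <= d + n)%N by lia.
rewrite addSn; split.
  move/(decompE L _ dn1) => [c1 [hc1 gc1 hxc1]].
  have [t2 [gt2 dt2 hx2]] := (IH (x - c1)).1 hxc1.
  exists (c1 + t2); split.
  - apply: GamD => //; apply: (Gam_mono L n1 _ gc1); lia.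
  - apply/(decompE L _ dn1); exists c1; split => //; by rewrite addrAC subrr add0r.
  - by move: hx2; rewrite opprD addrA.
case=> t [gt dt hxt].
have [c1 [hc1 gc1 htc1]] := (decompE L _ dn1).1 dt.
apply/(decompE L _ dn1); exists c1; split => //.
apply/(IH (x - c1)); exists (t - c1); split => //.
- apply: GamB => //; apply: (Gam_mono L n1 _ gc1); lia.
- by rewrite opprB addrA subrK.
Qed.

Lemma TL r p q1 q2 (L : Lat p q1 q2) n k (x e : Zr r) :
  (1 <= n)%N -> (n <= k)%N -> Dom q1 q2 k x ->
  Dom q1 q2 n (rep p q1 n x + e) -> Dom q1 q2 k (x + e).
Proof.
move=> n1 nk hx he.
have [t [gt dt hxt]] := (Tile L x n1 nk).1 hx.
have ht : rep p q1 n x = x - t.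
  by apply: (rep_eq L n1) => //; rewrite opprB addrC subrK.
apply/(Tile L _ n1 nk); exists t; split => //.
by rewrite addrAC -ht.
Qed.

Lemma NC1 r p q1 q2 (L : Lat p q1 q2) n k (a e : Zr r) :
  (1 <= n)%N -> (n <= k)%N -> Dom q1 q2 n (rep p q1 n a + e) ->
  rep p q1 k (a + e) = rep p q1 k a + e.
Proof.
move=> n1 nk he; have k1 : (1 <= k)%N by lia.
apply: (rep_eq L k1).
  apply: (TL L n1 nk); first exact: (rep_Dom L _ k1).
  by rewrite (rep_rep L _ n1 nk).
by rewrite opprD addrACA subrr addr0; exact: (rep_Gam L _ k1).
Qed.

Lemma NC2 r p q1 q2 (L : Lat p q1 q2) n k (a e : Zr r) :
  (1 <= n)%N -> (n <= k)%N -> Dom q1 q2 n (rep p q1 n a + e) ->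
  (Dom q1 q2 k (rep p q1 k.+1 a) <-> Dom q1 q2 k (rep p q1 k.+1 a + e)).
Proof.
move=> n1 nk he; have nk1 : (n <= k.+1)%N by lia.
split=> h.
  by apply: (TL L n1 nk h); rewrite (rep_rep L _ n1 nk1).
have -> : rep p q1 k.+1 a = (rep p q1 k.+1 a + e) + - e by rewrite addrK.
apply: (TL L n1 nk h).
rewrite -(NC1 L n1 nk1 he) (rep_rep L _ n1 nk1) (NC1 L n1 (leqnn n) he).
by rewrite addrK; exact: (rep_Dom L _ n1).
Qed.

Definition Lv r (p q1 q2 : nat -> 'I_r -> nat) i (a : Zr r) :=
  exists y, J p q1 q2 i y /\ Gam p i.+1 (a - y).
Definition Ge r (p q1 q2 : nat -> 'I_r -> nat) k (a : Zr r) :=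
  forall i, (i < k)%N -> ~ Lv p q1 q2 i a.

Lemma Jf_stable r (p q1 q2 : nat -> 'I_r -> nat) n i (a : Zr r) :
  (i <= n)%N -> (Jf p q1 q2 n i a <-> J p q1 q2 i a).
Proof.
elim: n => [|n IH] hi.
  by have -> : i = 0%N by lia.
case: (leqP i n) => hin.
  by rewrite /= hin; apply: IH.
have -> : i = n.+1 by lia.
by [].
Qed.

Lemma J0 r (p q1 q2 : nat -> 'I_r -> nat) (a : Zr r) : J p q1 q2 0 a <-> a = 0.
Proof. by rewrite /J /= vzeroE. Qed.

Lemma JS r (p q1 q2 : nat -> 'I_r -> nat) k (a : Zr r) : (1 <= k)%N ->
  (J p q1 q2 k a <-> Dom q1 q2 k a /\ Ge p q1 q2 k a).
Proof.
case: k => [//|k] _; rewrite /J /= ltnn; split.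
  move=> [hd hn]; split => // i hi [y [hy hg]]; apply: hn; exists i; split => //.
  exists y; split; first by apply/(Jf_stable _ _ _ _ (_ : (i <= k)%N)) => //; lia.
  by rewrite vnegE vaddE.
move=> [hd hg]; split => // [[i [hi [y [hy hy2]]]]]; apply: (hg i hi); exists y; split.
  by apply/(Jf_stable _ _ _ _ (_ : (i <= k)%N)) => //; lia.
by move: hy2; rewrite vnegE vaddE.
Qed.

Lemma Lv_Gam r p q1 q2 i (a c : Zr r) :
  Lv p q1 q2 i a -> Gam p i.+1 c -> Lv p q1 q2 i (a + c).
Proof. by move=> [y [hy hg]] hc; exists y; split => //; rewrite addrAC; apply: GamD. Qed.

Lemma J_Dom r p q1 q2 k (y : Zr r) : (1 <= k)%N -> J p q1 q2 k y -> Dom q1 q2 k y.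
Proof. by move=> k1 /(JS _ _ _ _ k1) []. Qed.

Lemma Ge_Gam r p q1 q2 (L : Lat p q1 q2) k (a c : Zr r) :
  Ge p q1 q2 k a -> Gam p k c -> Ge p q1 q2 k (a + c).
Proof.
move=> hg hc i hi hl; apply: (hg i hi).
have -> : a = (a + c) + - c by rewrite addrK.
apply: Lv_Gam => //; apply: GamN; apply: (Gam_mono L _ hi hc) => //.
Qed.

Lemma Lv0 r p q1 q2 (a : Zr r) : Lv p q1 q2 0 a <-> Gam p 1 a.
Proof.
split; first by move=> [y [/J0 -> hg]]; move: hg; rewrite subr0.
by move=> h; exists 0; split; [apply/J0 | rewrite subr0].
Qed.

Lemma Lv_lt r p q1 q2 (L : Lat p q1 q2) i i' (a : Zr r) :
  (i < i')%N -> Lv p q1 q2 i a -> Lv p q1 q2 i' a -> False.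
Proof.
move=> ii hl [y' [hy' hg']].
have i1 : (1 <= i')%N by lia.
have [_ hge] := (JS _ _ _ _ i1).1 hy'.
apply: (hge i ii).
have -> : y' = a + (y' - a) by rewrite addrC subrK.
have hii : (i.+1 <= i'.+1)%N by lia.
apply: Lv_Gam => //; apply: (Gam_mono L _ hii) => //.
exact: GamBC.
Qed.

Lemma Lv_uniq r p q1 q2 (L : Lat p q1 q2) i i' (a : Zr r) :
  Lv p q1 q2 i a -> Lv p q1 q2 i' a -> i = i'.
Proof.
move=> h h'; case: (ltngtP i i') => // hii.
  by case: (Lv_lt L hii h h').
by case: (Lv_lt L hii h' h).
Qed.

Lemma Lv_cover r p q1 q2 (L : Lat p q1 q2) (a : Zr r) : exists i, Lv p q1 q2 i a.
Proof.
have [N [N1 hN]] := L_cover L a.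
case: (Classical_Prop.classic (exists i, (i < N)%N /\ Lv p q1 q2 i a)).
  by move=> [i [_ h]]; exists i.
move=> hn; exists N; exists a; split; last by rewrite subrr; apply: Gam0.
apply/(JS _ _ _ _ N1); split => // i hi hl; apply: hn; by exists i.
Qed.

Lemma L5 r p q1 q2 (L : Lat p q1 q2) k (a : Zr r) : (1 <= k)%N -> Ge p q1 q2 k a ->
  (Lv p q1 q2 k a <-> Dom q1 q2 k (rep p q1 k.+1 a)).
Proof.
move=> k1 hge; have k2 : (1 <= k.+1)%N by lia.
split.
  move=> [y [hy hg]]; have hdy := J_Dom k1 hy.
  by rewrite (rep_eq L k2 _ hg) //; apply: (L_nest L).
move=> hd; exists (rep p q1 k.+1 a); split; last exact: (rep_Gam L _ k2).
apply/(JS _ _ _ _ k1); split => //.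
have -> : rep p q1 k.+1 a = a + (rep p q1 k.+1 a - a) by rewrite addrC subrK.
apply: (Ge_Gam L) => //; apply: GamBC; apply: (Gam_mono L k1 (leqnSn k)).
exact: (rep_Gam L _ k2).
Qed.

Lemma J_step r p q1 q2 (L : Lat p q1 q2) k (j c : Zr r) : (1 <= k)%N ->
  J p q1 q2 k j -> Gam p k c -> ~ Gam p k.+1 c ->
  J p q1 q2 k.+1 (rep p q1 k.+1 (j + c)).
Proof.
move=> k1 hj hc hnc; have k2 : (1 <= k.+1)%N by lia.
have [hdj hgj] := (JS _ _ _ _ k1).1 hj.
apply/(JS _ _ _ _ k2); split; first exact: (rep_Dom L _ k2).
move=> i hi hl.
have hl2 : Lv p q1 q2 i (j + c).
  rewrite (addrSub (j + c) (rep p q1 k.+1 (j + c))).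
  have hii : (i.+1 <= k.+1)%N by lia.
  apply: Lv_Gam => //; apply: (Gam_mono L _ hii) => //.
  exact: (rep_Gam L _ k2).
case: (ltngtP i k) => hik; last first.
- subst i; move: hl2 => [y [hy hg]].
  have hdy := J_Dom k1 hy.
  have jy : j = y.
    apply: (Dom_uniq L k1) => //.
    have -> : j - y = (j + c - y) - c by rewrite addrAC addrK.
    apply: GamB => //; exact: (Gam_mono L k1 (leqnSn k) hg).
  by apply: hnc; move: hg; rewrite jy addrAC subrr add0r.
- lia.
- apply: (hgj i hik).
  have -> : j = (j + c) + - c by rewrite addrK.
  apply: Lv_Gam => //; apply: GamN; exact: (Gam_mono L _ hik hc).
Qed.

Lemma J_ne r p q1 q2 (L : Lat p q1 q2) (j0 : 'I_r) k : (1 <= k)%N ->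
  exists y : Zr r, J p q1 q2 k y.
Proof.
elim: k => [//|k IH] _.
case: (posnP k) => [k0|k1].
  subst k; exists [ffun j => ((j == j0) : nat)%:Z].
  apply/(JS _ _ _ _ (ltnSn 0)); split.
    move=> j; rewrite ffunE; have [h1 h2] := L_qbig L j (ltnSn 0); case: (j == j0) => /=; lia.
  move=> i; rewrite ltnS leqn0 => /eqP -> /Lv0 /(_ j0); rewrite ffunE eqxx /=.
  rewrite dvdzE /= dvdn1 => /eqP h; have := L_big L j0 (ltnSn 0); lia.
have [y hy] := IH k1.
exists (rep p q1 k.+1 (y + [ffun j => ((j == j0) * p k j0)%:Z])).
apply: (J_step L) => //.
  move=> j; rewrite ffunE; case: (eqVneq j j0) => [->|hne] /=.
    by rewrite mul1n dvdzz.
  by rewrite mul0n dvdz0.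
move=> /(_ j0); rewrite ffunE eqxx mul1n dvdzE /= => /dvdn_leq.
have := L_incr L j0 k1; have := L_pos L j0 k1; lia.
Qed.

Lemma GeS r p q1 q2 k (a : Zr r) :
  Ge p q1 q2 k.+1 a <-> Ge p q1 q2 k a /\ ~ Lv p q1 q2 k a.
Proof.
split.
  by move=> h; split; [move=> i hi; apply: h; lia | apply: h].
move=> [h1 h2] i; rewrite ltnS leq_eqVlt => /orP [/eqP ->|hi] //; exact: h1.
Qed.

Lemma same_level r p q1 q2 (L : Lat p q1 q2) n (a e : Zr r) : (1 <= n)%N ->
  Ge p q1 q2 n a -> Ge p q1 q2 n (a + e) -> Dom q1 q2 n (rep p q1 n a + e) ->
  forall l, Lv p q1 q2 l a -> Lv p q1 q2 l (a + e).
Proof.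
move=> n1 ga gae he.
have step : forall k, (n <= k)%N -> (Ge p q1 q2 k a <-> Ge p q1 q2 k (a + e)).
  move=> k /subnK <-; elim: (k - n)%N => [|d IH] //; rewrite addSn.
  have k1 : (1 <= d + n)%N by lia.
  have nk : (n <= d + n)%N by lia.
  have nk1 : (n <= (d + n).+1)%N by lia.
  rewrite !GeS; split.
    move=> [g1 g2]; have g1' := IH.1 g1; split => //.
    rewrite (L5 L k1 g1') (NC1 L n1 nk1 he) -(NC2 L n1 nk he).
    by rewrite -(L5 L k1 g1).
  move=> [g1 g2]; have g1' := IH.2 g1; split => //.
  rewrite (L5 L k1 g1') (NC2 L n1 nk he) -(NC1 L n1 nk1 he).
  by rewrite -(L5 L k1 g1).
move=> l hl.
have nl : (n <= l)%N.
  by rewrite leqNgt; apply/negP => hl'; exact: (ga l hl' hl).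
have gl : Ge p q1 q2 l a by move=> i hi hi'; have := Lv_uniq L hi' hl; lia.
have [i hi] := Lv_cover L (a + e).
case: (ltngtP i l) => hil.
- by case: ((step l nl).1 gl i hil hi).
- have : Ge p q1 q2 l.+1 (a + e).
    by move=> i' hi' hl'; have := Lv_uniq L hl' hi; lia.
  move/(step l.+1 (leqW nl))/(_ l (ltnSn l)); by [].
- by rewrite -hil.
Qed.

Lemma gA (G : Type) mul inv (e : G) (hG : is_group mul inv e) x y z :
  mul x (mul y z) = mul (mul x y) z.
Proof. by case: hG. Qed.
Lemma g1l (G : Type) mul inv (e : G) (hG : is_group mul inv e) x : mul e x = x.
Proof. by case: hG. Qed.
Lemma gVl (G : Type) mul inv (e : G) (hG : is_group mul inv e) x : mul (inv x) x = e.
Proof. by case: hG. Qed.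
Lemma gK (G : Type) mul inv (e : G) (hG : is_group mul inv e) x y :
  mul (inv x) (mul x y) = y.
Proof. by rewrite (gA hG) (gVl hG) (g1l hG). Qed.
Lemma gVr (G : Type) mul inv (e : G) (hG : is_group mul inv e) x : mul x (inv x) = e.
Proof.
rewrite -[mul x (inv x)](g1l hG) -{1}(gVl hG (inv x)) -(gA hG) (gA hG (inv x) x).
by rewrite (gVl hG x) (g1l hG) (gVl hG).
Qed.
Lemma g1r (G : Type) mul inv (e : G) (hG : is_group mul inv e) x : mul x e = x.
Proof. by rewrite -(gVl hG x) (gA hG) (gVr hG) (g1l hG). Qed.
Lemma gKV (G : Type) mul inv (e : G) (hG : is_group mul inv e) x y :
  mul x (mul (inv x) y) = y.
Proof. by rewrite (gA hG) (gVr hG) (g1l hG). Qed.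
Lemma gVK (G : Type) mul inv (e : G) (hG : is_group mul inv e) x : inv (inv x) = x.
Proof. by rewrite -[inv (inv x)](g1r hG) -(gVl hG x) (gA hG) (gVl hG) (g1l hG). Qed.
Lemma gIl (G : Type) mul inv (e : G) (hG : is_group mul inv e) x y z :
  mul x y = mul x z -> y = z.
Proof. by move=> h; rewrite -(gK hG x y) h (gK hG). Qed.
Lemma gIr (G : Type) mul inv (e : G) (hG : is_group mul inv e) x y z :
  mul y x = mul z x -> y = z.
Proof.
move=> h; rewrite -(g1r hG y) -(g1r hG z) -(gVr hG x) !(gA hG) h //.
Qed.
Lemma gVM (G : Type) mul inv (e : G) (hG : is_group mul inv e) x y :
  inv (mul x y) = mul (inv y) (inv x).
Proof.
apply: (gIl hG (x := mul x y)); rewrite (gVr hG) -(gA hG) (gA hG y) (gVr hG) (g1l hG).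
by rewrite (gVr hG).
Qed.
Lemma gV1 (G : Type) mul inv (e : G) (hG : is_group mul inv e) : inv e = e.
Proof. by rewrite -{2}(gVl hG e) (g1r hG). Qed.

Record Setup (G : countType) (mul : G -> G -> G) (inv : G -> G) (e : G) (r : nat)
  (iota : Zr r -> G) (R : seq G) (p q1 q2 : nat -> 'I_r -> nat) (m : nat)
  (eta : G -> Sigma m) : Prop := {
  S_grp : is_group mul inv e;
  S_inj : injective iota;
  S_hom : forall a b, iota (vadd a b) = mul (iota a) (iota b);
  S_norm : forall g a, exists b, mul (mul g (iota a)) (inv g) = iota b;
  S_one : e \in R;
  S_rep : forall g, exists! rho, rho \in R /\ exists a, g = mul (iota a) rho;
  S_lat : Lat p q1 q2;
  S_m : (2 <= m)%N;
  S_G1 : forall a, Gam p 1 a -> eta (iota a) = alpha m 1;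
  S_beta : forall a rho, Gam p 1 a -> rho \in R -> rho <> e ->
      eta (mul (iota a) rho) = beta m;
  S_n : forall n a y rho, (1 <= n)%N -> Gam p n.+1 a -> J p q1 q2 n y -> rho \in R ->
      eta (mul (iota (vadd a y)) rho) = alpha m n.+1
}.

Lemma ioD G mul inv e r iota R p q1 q2 m eta
  (S : @Setup G mul inv e r iota R p q1 q2 m eta) (a b : Zr r) :
  iota (a + b) = mul (iota a) (iota b).
Proof. by rewrite -vaddE (S_hom S). Qed.
Lemma io0 G mul inv e r iota R p q1 q2 m eta
  (S : @Setup G mul inv e r iota R p q1 q2 m eta) : iota 0 = e.
Proof.
have hG := S_grp S.
apply: (gIl hG (x := iota 0)); rewrite -(ioD S) addr0 (g1r hG) //.
Qed.
Lemma ioN G mul inv e r iota R p q1 q2 m eta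
  (S : @Setup G mul inv e r iota R p q1 q2 m eta) (a : Zr r) :
  iota (- a) = inv (iota a).
Proof.
have hG := S_grp S.
apply: (gIl hG (x := iota a)); rewrite -(ioD S) subrr (io0 S) (gVr hG) //.
Qed.

Lemma alpha_some m i : (1 <= m)%N -> exists v, alpha m i = Some v.
Proof. by case: m => [//|m] _; exists (inord ((i + m) %% m.+1)). Qed.

Lemma alpha_neq m k : (2 <= m)%N -> alpha m k <> alpha m k.+1.
Proof.
case: m => [//|m] hm /= [] /(congr1 (@nat_of_ord _)); rewrite !inordK ?ltn_pmod //.
rewrite addSn modnS; case: ifP => [hd h0|_ h]; last by lia.
have h1 : (m.+1 %| k + m)%N by apply/eqP.
have := dvdn_sub hd h1; rewrite subSn // subnn dvdn1; lia.
Qed.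

Definition Vv (G : eqType) m (e : G) i (rho : G) : Sigma m :=
  if i == 0%N then (if rho == e then alpha m 1 else beta m) else alpha m i.+1.

Lemma eta_lv G mul inv e r iota R p q1 q2 m eta
  (S : @Setup G mul inv e r iota R p q1 q2 m eta) i (a : Zr r) rho :
  Lv p q1 q2 i a -> rho \in R -> eta (mul (iota a) rho) = Vv m e i rho.
Proof.
have hG := S_grp S; move=> hl hR; rewrite /Vv.
case: i hl => [|i] hl.
  have ga := (Lv0 _ _ _ a).1 hl; rewrite /=.
  case: (eqVneq rho e) => [->|hne].
    by rewrite (g1r hG); apply: (S_G1 S).
  by apply: (S_beta S) => //; apply/eqP.
move: hl => [y [hy hg]] /=.
by rewrite -[a](subrK y) -vaddE; apply: (S_n S).
Qed.

Lemma Vv_some (G : eqType) m (e : G) i rho : (1 <= i)%N -> (1 <= m)%N ->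
  exists v, Vv m e i rho = Some v.
Proof. by case: i => [//|i] _ m1; rewrite /Vv /=; apply: alpha_some. Qed.

Lemma Vv_e_some (G : eqType) m (e : G) i : (1 <= m)%N -> exists v, Vv m e i e = Some v.
Proof. by move=> m1; rewrite /Vv eqxx; case: (i == 0%N); apply: alpha_some. Qed.

Lemma Per_lv G mul inv e r iota R p q1 q2 m eta
  (S : @Setup G mul inv e r iota R p q1 q2 m eta) n i (b : Zr r) rho :
  (i < n)%N -> Lv p q1 q2 i b -> rho \in R ->
  Per mul inv iota p eta n (Vv m e i rho) (mul (iota b) rho).
Proof.
have hG := S_grp S; move=> hin hl hR c hc.
rewrite (gA hG) -(ioN S) -(ioD S) addrC; apply: (eta_lv S) => //.
apply: Lv_Gam => //; apply: GamN; apply: (Gam_mono (S_lat S) _ hin hc) => //.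
Qed.

Lemma Cset_val G mul inv e r iota R p q1 q2 m eta
  (S : @Setup G mul inv e r iota R p q1 q2 m eta) n z al g :
  Cset mul inv iota p eta n z -> Per mul inv iota p eta n al g -> z g = al.
Proof.
have hG := S_grp S; move=> [_ hz] hp; have := (hz al g).2 hp (0 : Zr r) (Gam0 _ _).
by rewrite (io0 S) (gV1 hG) (g1l hG).
Qed.

Lemma dec_uniq G mul inv e r iota R p q1 q2 m eta
  (S : @Setup G mul inv e r iota R p q1 q2 m eta) (a a' : Zr r) rho rho' :
  rho \in R -> rho' \in R -> mul (iota a) rho = mul (iota a') rho' -> a = a' /\ rho = rho'.
Proof.
have hG := S_grp S; move=> hr hr' h.
have [x [_ hx]] := S_rep S (mul (iota a) rho).
have e1 : x = rho by apply: hx; split => //; exists a.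
have e2 : x = rho' by apply: hx; split => //; exists a'.
have er : rho = rho' by rewrite -e1 e2.
split => //; apply: (S_inj S); move: h; rewrite er; exact: (gIr hG (x := rho')).
Qed.

Ltac zr := apply/ffunP => ?; rewrite !ffunE; ring.

Lemma recog G mul inv e r iota R p q1 q2 m eta
  (S : @Setup G mul inv e r iota R p q1 q2 m eta) n z s (W : seq G) :
  (1 <= n)%N -> Cset mul inv iota p eta n z ->
  (forall g, g \in W -> z g = eta (mul (inv s) g)) ->
  {subset R <= W} -> (forall a, Dom q1 q2 n.+1 a -> iota a \in W) ->
  exists c, Gam p n c /\ inv s = iota c.
Proof.
move=> n1 hC hW hRW hDW.
have hG := S_grp S; have L := S_lat S; have m1 : (1 <= m)%N by have := S_m S; lia.
have [rho [[hR [v hv]] _]] := S_rep S s.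
have rho_e : rho = e.
  case: (eqVneq rho e) => // hne; exfalso.
  have zr : z rho = beta m.
    apply: (Cset_val S hC) => c hc; rewrite -(ioN S); apply: (S_beta S) => //; last by apply/eqP.
    by apply: GamN; apply: (Gam_mono L (leqnn 1) n1 hc).
  have := hW rho (hRW _ hR); rewrite zr.
  have [w hw] := S_norm S (inv rho) (- v).
  have -> : mul (inv s) rho = iota w.
    by rewrite -hw (gVK hG) hv (gVM hG) (ioN S).
  have [i hi] := Lv_cover L w.
  rewrite -(g1r hG (iota w)) (eta_lv S hi (S_one S)).
  by have [x ->] := @Vv_e_some _ m e i m1.
move: hv; rewrite rho_e (g1r hG) => hv.
set c := - v.
have hs : inv s = iota c by rewrite hv -(ioN S).
exists c; split => //.
have key : forall i a, (i < n)%N -> Lv p q1 q2 i a -> Dom q1 q2 n.+1 a ->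
    eta (mul (iota (c + a)) e) = Vv m e i e.
  move=> i a hin hl hd.
  have := Cset_val S hC (Per_lv S hin hl (S_one S)); rewrite (g1r hG) => <-.
  by rewrite (hW _ (hDW _ hd)) hs -(ioD S) (g1r hG).
suff : forall k, (k.+1 <= n)%N -> Gam p k.+1 c by move/(_ n.-1); rewrite prednK //; apply.
elim => [|k IH] hk.
  case: (Classical_Prop.classic (Gam p 1 c)) => // hnc; exfalso.
  set x := rep p q1 1 c - c; set a := rep p q1 2 x.
  have ga : Gam p 1 a.
    have -> : a = x - (x - a) by zr.
    apply: GamB; first by apply: GamBC; apply: (rep_Gam L _ (leqnn 1)).
    by apply: (Gam_mono L (leqnn 1) (leqnSn 1)); apply: (rep_Gam L).
  have hda : Dom q1 q2 n.+1 a.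
    by apply: (Dom_mono L (_ : (1 <= 2)%N) (_ : (2 <= n.+1)%N)) => //; apply: (rep_Dom L).
  have k1 := key 0%N a n1 ((Lv0 _ _ _ a).2 ga) hda.
  have hy : J p q1 q2 1 (rep p q1 1 c).
    apply/(JS _ _ _ _ (leqnn 1)); split; first exact: (rep_Dom L _ (leqnn 1)).
    move=> i; rewrite ltnS leqn0 => /eqP -> /Lv0 hg; apply: hnc.
    rewrite (addrSub c (rep p q1 1 c)); apply: GamD => //; exact: (rep_Gam L _ (leqnn 1)).
  have l1 : Lv p q1 q2 1 (c + a).
    exists (rep p q1 1 c); split => //.
    have -> : c + a - rep p q1 1 c = - (x - a) by rewrite /x; zr.
    by apply: GamN; apply: (rep_Gam L).
  move: k1; rewrite (eta_lv S l1 (S_one S)) /Vv /= eqxx => h.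
  by apply: (@alpha_neq m 1 (S_m S)); rewrite h.
have gk : Gam p k.+1 c by apply: IH; lia.
case: (Classical_Prop.classic (Gam p k.+2 c)) => // hnc; exfalso.
have K1 : (1 <= k.+1)%N by [].
have [j0 _] : exists j0 : 'I_r, True.
  case: (Classical_Prop.classic (exists j0 : 'I_r, True)) => // hn.
  by exfalso; apply: hnc => j; case: hn; exists j.
have [y hy] := J_ne L j0 K1.
have hd := J_step L K1 hy gk hnc.
set d := rep p q1 k.+2 (y + c) in hd.
set a0 := d - c; set a := rep p q1 k.+3 a0.
have lk : Lv p q1 q2 k.+1 a.
  exists y; split => //.
  have -> : a - y = (- (a0 - a)) + (- ((y + c) - d)) by rewrite /a0; zr.
  apply: GamD; apply: GamN.
    by apply: (Gam_mono L _ (leqnSn k.+2)) => //; apply: (rep_Gam L).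
  by apply: (rep_Gam L).
have lk1 : Lv p q1 q2 k.+2 (c + a).
  exists d; split => //.
  have -> : c + a - d = - (a0 - a) by rewrite /a0; zr.
  by apply: GamN; apply: (rep_Gam L).
have hda : Dom q1 q2 n.+1 a.
  by apply: (Dom_mono L (_ : (1 <= k.+3)%N) (_ : (k.+3 <= n.+1)%N)) => //; apply: (rep_Dom L).
have := key k.+1 a hk lk hda.
rewrite (eta_lv S lk1 (S_one S)) /Vv /= => h.
by apply: (@alpha_neq m k.+2 (S_m S)); rewrite h.
Qed.

Lemma box_seq r (q1 q2 : nat -> 'I_r -> nat) N :
  exists s : seq (Zr r), forall a, Dom q1 q2 N a -> a \in s.
Proof.
set B := (\max_(j < r) (q1 N j + q2 N j))%N.
exists [seq [ffun j => ((nat_of_ord (i j))%:Z - B%:Z)%R] | i : {ffun 'I_r -> 'I_(B.*2.+1)} <- enum {ffun 'I_r -> 'I_(B.*2.+1)}].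
move=> a ha.
have hj : forall j, (q1 N j + q2 N j <= B)%N by move=> j; apply: (leq_bigmax j).
have -> : a = [ffun j => ((nat_of_ord (([ffun j => inord (absz (a j + B%:Z)) : 'I_(B.*2.+1)]) j))%:Z - B%:Z)%R].
  apply/ffunP => j; have := ha j; have := hj j; clearbody B => h1 h2.
  have h3 : 0 <= a j + B%:Z by lia.
  have h4 : (absz (a j + B%:Z))%:Z = a j + B%:Z by rewrite gez0_abs.
  rewrite !ffunE inordK; first by rewrite h4; set x := a j; lia.
  by rewrite -ltz_nat h4 -muln2; set x := a j; lia.
apply/mapP; exists [ffun j => inord (absz (a j + B%:Z)) : 'I_(B.*2.+1)]; first by rewrite mem_enum.
by [].
Qed.

Lemma bound_list (T : eqType) (P : T -> nat -> Prop) (s : seq T) :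
  (forall x B B', (B <= B')%N -> P x B -> P x B') ->
  (forall x, x \in s -> exists B, P x B) -> exists B, forall x, x \in s -> P x B.
Proof.
move=> hm; elim: s => [|y s IH] hs; first by exists 0%N.
have [B1 h1] := hs y (mem_head _ _).
have [B2 h2] : exists B, forall x, x \in s -> P x B.
  by apply: IH => x hx; apply: hs; rewrite inE hx orbT.
exists (maxn B1 B2) => x; rewrite inE => /orP [/eqP ->|hx].
  by apply: (hm _ B1) => //; apply: leq_maxl.
by apply: (hm _ B2) => //; [apply: leq_maxr | apply: h2].
Qed.

Lemma floor_same (x x' q p : int) : 0 < p -> `|x' - x| < p ->
  (modz (divz (x + q) p) 2 == 0) = (modz (divz (x' + q) p) 2 == 0) ->
  ((x + q) %% p)%Z - q + (x' - x) = ((x' + q) %% p)%Z - q.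
Proof.
move=> hp hb hpar.
have e1 := divz_eq (x + q) p; have e2 := divz_eq (x' + q) p.
have r1 : 0 <= ((x + q) %% p)%Z by apply: modz_ge0; lia.
have r2 : 0 <= ((x' + q) %% p)%Z by apply: modz_ge0; lia.
have r1' : ((x + q) %% p)%Z < p by apply: ltz_pmod.
have r2' : ((x' + q) %% p)%Z < p by apply: ltz_pmod.
set k := ((x + q) %/ p)%Z in e1 hpar; set k' := ((x' + q) %/ p)%Z in e2 hpar.
set rr := ((x + q) %% p)%Z in e1 r1 r1' *; set rr' := ((x' + q) %% p)%Z in e2 r2 r2' *.
have f1 := divz_eq k 2; have f2 := divz_eq k' 2.
have s1 : 0 <= (k %% 2)%Z by apply: modz_ge0.
have s2 : 0 <= (k' %% 2)%Z by apply: modz_ge0.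
have s1' : (k %% 2)%Z < 2 by apply: ltz_pmod.
have s2' : (k' %% 2)%Z < 2 by apply: ltz_pmod.
have hpar' : (k %% 2)%Z = (k' %% 2)%Z.
  move: hpar; case: (eqVneq (k %% 2)%Z 0) => h1; case: (eqVneq (k' %% 2)%Z 0) => h2 //=; lia.
set u := (k %/ 2)%Z in f1; set u' := (k' %/ 2)%Z in f2.
set t := (k %% 2)%Z in f1 hpar' s1 s1'; set t' := (k' %% 2)%Z in f2 hpar' s2 s2'.
clearbody k k' rr rr' u u' t t'.
have hkk : (k' - k) * p < 2 * p by nia.
have hkk' : - (2 * p) < (k' - k) * p by nia.
have hk1 : k' - k < 2 by nia.
have hk2 : -2 < k' - k by nia.
have hk : k = k' by lia.
subst k'; nia.
Qed.

Lemma conjcalc G mul inv e r iota R p q1 q2 m eta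
  (S : @Setup G mul inv e r iota R p q1 q2 m eta) g h h' rho rhon (cn b b' : Zr r) :
  g = mul (iota cn) rhon -> mul g h = mul (iota b) rho -> mul g h' = mul (iota b') rho ->
  iota (b' - b) = mul (mul rhon (mul h' (inv h))) (inv rhon).
Proof.
have hG := S_grp S; move=> hg hb hb'.
have e1 : mul (mul g h') (inv (mul g h)) = iota (b' - b).
  by rewrite hb hb' (gVM hG) -(gA hG) (gKV hG) (ioD S) (ioN S).
have e2 : mul (mul g h') (inv (mul g h)) = mul g (mul (mul h' (inv h)) (inv g)).
  by rewrite (gVM hG) -!(gA hG).
have e3 : rhon = mul (iota (- cn)) g.
  by rewrite hg (gA hG) -(ioD S) addNr (io0 S) (g1l hG).
have e4 : iota (b' - b) = mul g (mul (mul h' (inv h)) (inv g)) by rewrite -e2 e1.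
have e5 : iota (b' - b) = mul (mul (iota (- cn)) (iota (b' - b))) (iota cn).
  by rewrite -!(ioD S) addrAC addNr add0r.
rewrite e3 (gVM hG) -(ioN S) opprK e5 e4.
by rewrite -!(gA hG).
Qed.

Lemma same_val G mul inv e r iota R p q1 q2 m eta
  (S : @Setup G mul inv e r iota R p q1 q2 m eta) n (bh bh' c : Zr r) rho :
  (1 <= n)%N -> Gam p n c -> Ge p q1 q2 n bh -> Ge p q1 q2 n bh' ->
  (forall j, `|bh' j - bh j| < (p n j)%:Z) ->
  (forall j, (modz (divz (bh j + (q1 n j)%:Z) (p n j)%:Z) 2 == 0) =
             (modz (divz (bh' j + (q1 n j)%:Z) (p n j)%:Z) 2 == 0)) ->
  rho \in R ->
  eta (mul (iota (c + bh)) rho) = eta (mul (iota (c + bh')) rho).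
Proof.
move=> n1 gc g1 g2 hb hpar hR; have L := S_lat S.
set e' := bh' - bh.
have hrep : rep p q1 n bh + e' = rep p q1 n bh'.
  apply/ffunP => j; rewrite !ffunE; apply: floor_same => //.
  by have := L_pos L j n1; lia.
have ga : Ge p q1 q2 n (c + bh) by rewrite addrC; apply: (Ge_Gam L).
have hae : c + bh + e' = c + bh' by rewrite /e'; zr.
have gae : Ge p q1 q2 n (c + bh + e') by rewrite hae addrC; apply: (Ge_Gam L).
have hd : Dom q1 q2 n (rep p q1 n (c + bh) + e').
  by rewrite [c + bh]addrC (rep_GamD L _ n1 gc) hrep; apply: (rep_Dom L).
have [l hl] := Lv_cover L (c + bh).
have hl' := same_level L n1 ga gae hd hl.
by rewrite (eta_lv S hl hR) -hae (eta_lv S hl' hR).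
Qed.

Local Close Scope ring_scope.
Lemma main_aux
  (G : countType) (mul : G -> G -> G) (inv : G -> G) (e : G)
  (hG : is_group mul inv e)
  (r : nat) (iota : Zr r -> G)
  (iota_inj : injective iota)
  (iota_hom : forall a b, iota (vadd a b) = mul (iota a) (iota b))
  (iota_normal : forall g a, exists b, mul (mul g (iota a)) (inv g) = iota b)
  (R : seq G) (R_uniq : uniq R) (R_one : e \in R)
  (R_rep : forall g, exists! rho, rho \in R /\ exists a, g = mul (iota a) rho)
  (p : nat -> 'I_r -> nat)
  (p_pos : forall i j, (1 <= i)%N -> (0 < p i j)%N)
  (p_incr : forall i j, (1 <= i)%N -> (p i j < p i.+1 j)%N)
  (p_dvd : forall i j, (1 <= i)%N -> (p i j %| p i.+1 j)%N)
  (p_big : forall i j, (1 <= i)%N -> (2 * i + 1 < p i j)%N)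
  (p_index : forall i, (1 <= i)%N -> index_cond (gindex p i) i)
  (q1 q2 : nat -> 'I_r -> nat)
  (q_big : forall i j, (1 <= i)%N -> (i < q1 i j)%N /\ (i < q2 i j)%N)
  (q_sum : forall i j, (1 <= i)%N -> (q1 i j + q2 i j)%N = p i j)
  (D_one : forall i, (1 <= i)%N -> Dom q1 q2 i (vzero r))
  (D_nest : forall i a, (1 <= i)%N -> Dom q1 q2 i a -> Dom q1 q2 i.+1 a)
  (D_cover : forall a, exists i, (1 <= i)%N /\ Dom q1 q2 i a)
  (D_decomp : forall i a, (2 <= i)%N ->
      (Dom q1 q2 i a <->
       exists c, [/\ Dom q1 q2 i c, Gam p i.-1 c & Dom q1 q2 i.-1 (vadd a (vneg c))]))
  (m : nat) (hm : (2 <= m)%N)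
  (eta : G -> Sigma m)
  (eta_G1 : forall a, Gam p 1 a -> eta (iota a) = alpha m 1)
  (eta_beta : forall a rho, Gam p 1 a -> rho \in R -> rho <> e ->
      eta (mul (iota a) rho) = beta m)
  (eta_n : forall n a y rho, (1 <= n)%N -> Gam p n.+1 a -> J p q1 q2 n y -> rho \in R ->
      eta (mul (iota (vadd a y)) rho) = alpha m n.+1) :
  forall x : G -> Sigma m,
    in_orbit_closure mul inv eta x ->
    forall gs : nat -> G, pi_is mul inv iota p eta x gs ->
      card_le (fun y => in_orbit_closure mul inv eta y /\ pi_is mul inv iota p eta y gs)
              (m ^ (2 ^ r * size R)).
Proof.
Local Open Scope ring_scope.
move=> x Hx gs Hpi k f Hf Hinj.
have L : Lat p q1 q2 by split.
have S : Setup mul inv e iota R p q1 q2 eta by split.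
have m1 : (0 < m)%N by lia.
have [wit hwit] : exists wit : 'I_k -> 'I_k -> G,
    forall i i', i <> i' -> f i (wit i i') <> f i' (wit i i').
  have hw : forall i i' : 'I_k, exists h, i <> i' -> f i h <> f i' h.
    move=> i i'; case: (Classical_Prop.classic (exists h, f i h <> f i' h)) => [[h hh]|hn].
      by exists h.
    exists e => hne; exfalso; apply: hne; apply: Hinj => h.
    by case: (Classical_Prop.classic (f i h = f i' h)) => // hh; case: hn; exists h.
  exists (fun i i' => proj1_sig (ClassicalEpsilon.constructive_indefinite_description _ (hw i i'))).
  move=> i i'; exact: (proj2_sig (ClassicalEpsilon.constructive_indefinite_description _ (hw i i'))).
set F := [seq wit i i' | i <- enum 'I_k, i' <- enum 'I_k].
have hF : forall i i', wit i i' \in F by move=> i i'; apply: allpairs_f; rewrite mem_enum.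
set Tr := [seq (rh, hh) | rh <- R, hh <- [seq (h, h') | h <- F, h' <- F]].
pose P := fun (t : G * (G * G)) B => forall d : Zr r,
    iota d = mul (mul t.1 (mul t.2.2 (inv t.2.1))) (inv t.1) ->
    forall j, (`|d j| <= B)%N.
have hPm : forall t B1 B2, (B1 <= B2)%N -> P t B1 -> P t B2.
  by move=> t B1 B2 hle h d hd j; apply: leq_trans (h d hd j) hle.
have hPe : forall t, t \in Tr -> exists B, P t B.
  move=> t _.
  case: (Classical_Prop.classic (exists d, iota d = mul (mul t.1 (mul t.2.2 (inv t.2.1))) (inv t.1))).
    move=> [d hd]; exists (\max_j `|d j|)%N => d' hd' j.
    have -> : d' = d by apply: (S_inj S); rewrite hd hd'.
    exact: (leq_bigmax j).
  by move=> hn; exists 0%N => d hd; case: hn; exists d.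
have [B hB] := bound_list hPm hPe.
set n := B.+1.
have n1 : (1 <= n)%N by [].
have hpB : forall j, (B < p n j)%N by move=> j; have := L_big L j n1; lia.
have hdec : forall g, exists ab : Zr r * G, ab.2 \in R /\ g = mul (iota ab.1) ab.2.
  by move=> g; have [rho [[hR [a ha]] _]] := S_rep S g; exists (a, rho).
pose dec g := proj1_sig (ClassicalEpsilon.constructive_indefinite_description _ (hdec g)).
have decP : forall g, (dec g).2 \in R /\ g = mul (iota (dec g).1) (dec g).2.
  by move=> g; exact: (proj2_sig (ClassicalEpsilon.constructive_indefinite_description _ (hdec g))).
pose g := gs n.
pose b h := (dec (mul g h)).1.
pose rh h := (dec (mul g h)).2.
have rhR : forall h, rh h \in R by move=> h; exact: (decP _).1.
have bE : forall h, mul g h = mul (iota (b h)) (rh h) by move=> h; exact: (decP _).2.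
have key1 : forall i, exists c, Gam p n c /\
    forall h, h \in F -> f i h = eta (mul (iota (c + b h)) (rh h)).
  move=> i; have [_ hpi] := Hf i; have [z [hC hz]] := hpi n n1.
  have [bs hbs] := box_seq q1 q2 n.+1.
  have [s hs] := hC.1 ([seq mul g h | h <- F] ++ R ++ [seq iota a | a <- bs]).
  set W := [seq mul g h | h <- F] ++ R ++ [seq iota a | a <- bs] in hs.
  have hRW : {subset R <= W} by move=> rho hR; rewrite !mem_cat hR orbT.
  have hDW : forall a, Dom q1 q2 n.+1 a -> iota a \in W.
    by move=> a ha; rewrite !mem_cat map_f ?orbT // hbs.
  have [c [gc hc]] := recog S n1 hC (fun g0 hg0 => hs g0 hg0) hRW hDW.
  exists c; split => // h hh.
  rewrite hz /shift (gVK hG) (hs _ _) /shift; last by rewrite mem_cat map_f.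
  by rewrite hc bE (gA hG) -(ioD S).
have nonhole : forall h c, Gam p n c -> ~ Ge p q1 q2 n (b h) ->
    eta (mul (iota (c + b h)) (rh h)) = eta (mul (iota (b h)) (rh h)).
  move=> h c gc hng.
  have [i [hi hl]] : exists i, (i < n)%N /\ Lv p q1 q2 i (b h).
    case: (Classical_Prop.classic (exists i, (i < n)%N /\ Lv p q1 q2 i (b h))) => // hn.
    by exfalso; apply: hng => i hi hl; apply: hn; exists i.
  have hl' : Lv p q1 q2 i (b h + c).
    by apply: Lv_Gam => //; apply: (Gam_mono L _ hi gc).
  by rewrite (eta_lv S hl (rhR h)) addrC (eta_lv S hl' (rhR h)).
have hole_some : forall h c, Gam p n c -> Ge p q1 q2 n (b h) ->
    exists v, eta (mul (iota (c + b h)) (rh h)) = Some v.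
  move=> h c gc hg; have [l hl] := Lv_cover L (c + b h).
  have ln : (n <= l)%N.
    rewrite leqNgt; apply/negP => hl'; apply: (Ge_Gam L hg gc hl'); by rewrite addrC.
  rewrite (eta_lv S hl (rhR h)); apply: Vv_some => //; lia.
pose par h : {ffun 'I_r -> bool} :=
  [ffun j => modz (divz (b h j + (q1 n j)%:Z) (p n j)%:Z) 2 == 0].
have same : forall h h' c, h \in F -> h' \in F -> Gam p n c ->
    Ge p q1 q2 n (b h) -> Ge p q1 q2 n (b h') -> rh h = rh h' ->
    (forall j, par h j = par h' j) ->
    eta (mul (iota (c + b h)) (rh h)) = eta (mul (iota (c + b h')) (rh h')).
  move=> h h' c hF1 hF2 gc g1 g2 hrr hpar; rewrite -hrr; apply: (same_val S n1) => //.
  - move=> j.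
    have hb1 := bE h; have hb2 := bE h'; rewrite -hrr in hb2.
    have hgd := (decP g).2.
    have hc := conjcalc S hgd hb1 hb2.
    have hT : ((dec g).2, (h, h')) \in Tr.
      by apply: allpairs_f; [exact: (decP g).1 | apply: allpairs_f].
    have := hB _ hT _ hc j; have := hpB j; rewrite !ffunE.
    set d := (b h' j - b h j); move=> h1 h2.
    rewrite -abszE; rewrite ltz_nat; lia.
  - by move=> j; have := hpar j; rewrite !ffunE.
pose hb h : bool :=
  if ClassicalEpsilon.excluded_middle_informative (Ge p q1 q2 n (b h)) then true else false.
have hbP : forall h, hb h <-> Ge p q1 q2 n (b h).
  by move=> h; rewrite /hb; case: ClassicalEpsilon.excluded_middle_informative.
have sR : (0 < size R)%N by case: (R) R_one.
pose C := ('I_(size R).-1.+1 * {ffun 'I_r -> bool})%type.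
pose code h : C := (inord (index (rh h) R), par h).
have code_eq : forall h h', code h = code h' ->
    rh h = rh h' /\ forall j, par h j = par h' j.
  move=> h h' [] /(congr1 (@nat_of_ord _)); rewrite !inordK ?prednK ?index_mem ?rhR //.
  move=> hi hp; split; last by move=> j; rewrite hp.
  by rewrite -(nth_index e (rhR h)) hi nth_index.
pose d0 : 'I_m := Ordinal m1.
pose Phi (i : 'I_k) : {ffun C -> 'I_m} := [ffun kk =>
  if [seq h <- F | hb h && (code h == kk)] is h0 :: _ then odflt d0 (f i h0) else d0].
have Phi_inj : injective Phi.
  move=> i i' hP; case: (eqVneq i i') => // /eqP hne; exfalso.
  have hh := hwit i i' hne; have hFh := hF i i'.
  set h := wit i i' in hh hFh.
  have [c1 [gc1 hc1]] := key1 i; have [c2 [gc2 hc2]] := key1 i'.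
  case: (Classical_Prop.classic (Ge p q1 q2 n (b h))) => hg; last first.
    by apply: hh; rewrite (hc1 _ hFh) (hc2 _ hFh) !nonhole.
  have := congr1 (fun phi : {ffun C -> 'I_m} => phi (code h)) hP; rewrite /Phi !ffunE.
  case E: [seq h0 <- F | hb h0 && (code h0 == code h)] => [|h0 t].
    have : h \in [seq h0 <- F | hb h0 && (code h0 == code h)].
      by rewrite mem_filter hFh eqxx !andbT; apply/(hbP h).
    by rewrite E.
  have : h0 \in [seq h0 <- F | hb h0 && (code h0 == code h)] by rewrite E mem_head.
  rewrite mem_filter => /andP [/andP [hb0 /eqP hc0] hF0].
  have [hr0 hp0] := code_eq _ _ hc0.
  move/hbP: hb0 => hg0.
  have e1 : f i h0 = f i h by rewrite (hc1 _ hF0) (hc1 _ hFh); apply: same.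
  have e2 : f i' h0 = f i' h by rewrite (hc2 _ hF0) (hc2 _ hFh); apply: same.
  have [v1 hv1] := hole_some h c1 gc1 hg; have [v2 hv2] := hole_some h c2 gc2 hg.
  rewrite e1 e2 (hc1 _ hFh) (hc2 _ hFh) hv1 hv2 /= => hv.
  by apply: hh; rewrite (hc1 _ hFh) (hc2 _ hFh) hv1 hv2 hv.
have := leq_card Phi Phi_inj.
rewrite card_ord card_ffun card_ord card_prod card_ord card_ffun card_bool card_ord.
by rewrite prednK // mulnC.
Qed.

Local Close Scope ring_scope.
Unset Implicit Arguments.

Theorem proposition4p35
  (G : countType) (mul : G -> G -> G) (inv : G -> G) (e : G)
  (hG : is_group mul inv e)
  (r : nat) (iota : Zr r -> G)
  (iota_inj : injective iota)
  (iota_hom : forall a b, iota (vadd a b) = mul (iota a) (iota b))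
  (iota_normal : forall g a, exists b, mul (mul g (iota a)) (inv g) = iota b)
  (R : seq G) (R_uniq : uniq R) (R_one : e \in R)
  (R_rep : forall g, exists! rho, rho \in R /\ exists a, g = mul (iota a) rho)
  (p : nat -> 'I_r -> nat)
  (p_pos : forall i j, (1 <= i)%N -> (0 < p i j)%N)
  (p_incr : forall i j, (1 <= i)%N -> (p i j < p i.+1 j)%N)
  (p_dvd : forall i j, (1 <= i)%N -> (p i j %| p i.+1 j)%N)
  (p_big : forall i j, (1 <= i)%N -> (2 * i + 1 < p i j)%N)
  (p_index : forall i, (1 <= i)%N -> index_cond (gindex p i) i)
  (q1 q2 : nat -> 'I_r -> nat)
  (q_big : forall i j, (1 <= i)%N -> (i < q1 i j)%N /\ (i < q2 i j)%N)
  (q_sum : forall i j, (1 <= i)%N -> (q1 i j + q2 i j)%N = p i j)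
  (D_one : forall i, (1 <= i)%N -> Dom q1 q2 i (vzero r))
  (D_nest : forall i a, (1 <= i)%N -> Dom q1 q2 i a -> Dom q1 q2 i.+1 a)
  (D_cover : forall a, exists i, (1 <= i)%N /\ Dom q1 q2 i a)
  (D_decomp : forall i a, (2 <= i)%N ->
      (Dom q1 q2 i a <->
       exists c, [/\ Dom q1 q2 i c, Gam p i.-1 c & Dom q1 q2 i.-1 (vadd a (vneg c))]))
  (m : nat) (hm : (2 <= m)%N)
  (eta : G -> Sigma m)
  (eta_G1 : forall a, Gam p 1 a -> eta (iota a) = alpha m 1)
  (eta_beta : forall a rho, Gam p 1 a -> rho \in R -> rho <> e ->
      eta (mul (iota a) rho) = beta m)
  (eta_n : forall n a y rho, (1 <= n)%N -> Gam p n.+1 a -> J p q1 q2 n y -> rho \in R ->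
      eta (mul (iota (vadd a y)) rho) = alpha m n.+1) :
  forall x : G -> Sigma m,
    in_orbit_closure mul inv eta x ->
    forall gs : nat -> G, pi_is mul inv iota p eta x gs ->
      card_le (fun y => in_orbit_closure mul inv eta y /\ pi_is mul inv iota p eta y gs)
              (m ^ (2 ^ r * size R)).
Proof. intros. eapply main_aux; eassumption. Qed.
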